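(* Let $f\colon W\to U$ be a fibrant map between path connected spaces, with basepoints $\dagger\in W$, $*\in U$ and biset $B(f,\dagger,* )$. Let $U'\subseteq U$ be path connected with basepoint $*'$, let $\{W'_z\}_{z\in I}$ be the path connected components of $f^{-1}(U')$, with basepoints $\dagger'_z\in W'_z$, and let $B(f|_{W'_z},\dagger'_z,*')$ be the biset of $f|_{W'_z}\colon W'_z\to U'$. Let $()^-\colon B(f|_{W'_z},\dagger'_z,*')\to B(f,\dagger,* )$ be the congruences given by choices of paths $\gamma_z$ in $W$ from $\dagger$ to $\dagger'_z$ and $\gamma_*$ in $U$ from $*$ to $*'$: loops $\delta$ at $\dagger'_z$ map to $\gamma_z\delta\gamma_z^{-1}$, loops $\delta$ at $*'$ map to $\gamma_*\delta\gamma_*^{-1}$, and $b\mapsto f(\gamma_z)\,b\,\gamma_*^{-1}$. Then \[\bigsqcup_{z\in I}\pi_1(W,\dagger)\otimes_{\pi_1(W'_z,\dagger'_z)}B(f|_{W'_z},\dagger'_z,*')\longrightarrow B(f,\dagger,* ),\qquad g\otimes b\mapsto g\,b^-,\] is an isomorphism of $\pi_1(W,\dagger)$-$\pi_1(U',*')$-bisets, where $\pi_1(U',*')$ acts on $B(f,\dagger,* )$ via $()^-\colon\pi_1(U',*')\to\pi_1(U,* )$ and $\pi_1(W'_z,\dagger'_z)$ acts on $\pi_1(W,\dagger)$ via $()^-$.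
   Context: For a continuous map $f\colon Y\to X$ and basepoints $\dagger\in Y$, $*\in X$, $B(f,\dagger,* )$ is the set of homotopy classes rel endpoints of paths in $X$ from $f(\dagger)$ to $*$, a $\pi_1(Y,\dagger)$-$\pi_1(X,* )$-biset via $[\lambda]\cdot[\gamma]=[f\circ\lambda\#\gamma]$ and $[\gamma]\cdot[\mu]=[\gamma\#\mu]$. A map is fibrant if it has the homotopy lifting property with respect to all spaces. The product $A\otimes_K C$ of a right $K$-set and a left $K$-set is $A\times C$ modulo $(ak,c)=(a,kc)$. *)

(* Defs.v *)
From HB Require Import structures.
From mathcomp Require Import all_boot all_order all_algebra.
From mathcomp Require Import all_classical all_reals topology.
From mathcomp Require Import Rstruct Rstruct_topology.
From Stdlib Require Import Relations.
From Stdlib Require Import Rdefinitions.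
Import Order.TTheory GRing.Theory Num.Theory.

Set Implicit Arguments.
Unset Strict Implicit.
Unset Printing Implicit Defensive.

Local Open Scope classical_set_scope.
Local Open Scope ring_scope.

Definition I01 : set R := [set s : R | 0 <= s <= 1].
Definition I01sq : set (R * R) := [set p | I01 p.1 /\ I01 p.2].

Definition path_in (X : topologicalType) (A : set X) (p : R -> X) (a b : X) :=
  [/\ {within I01, continuous p}, (forall s, I01 s -> A (p s)), p 0 = a & p 1 = b].

Definition pconn (X : topologicalType) (A : set X) (a b : X) :=
  exists p : R -> X, path_in A p a b.

Definition path_connected (X : topologicalType) (A : set X) :=
  forall a b, A a -> A b -> pconn A a b.

Definition phtpy (X : topologicalType) (A : set X) (p q : R -> X) :=
  exists H : R * R -> X,
    [/\ {within I01sq, continuous H},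
        (forall s t, I01 s -> I01 t -> A (H (s, t))),
        (forall s, I01 s -> H (s, 0) = p s /\ H (s, 1) = q s) &
        (forall t, I01 t -> H (0, t) = p 0 /\ H (1, t) = p 1)].

Definition pcat (X : Type) (p q : R -> X) : R -> X :=
  fun s => if s <= 1 / 2 then p (2 * s) else q (2 * s - 1).
Definition invpath (X : Type) (p : R -> X) : R -> X := fun s => p (1 - s).



Definition fibrant (W U : topologicalType) (f : W -> U) :=
  forall (Y : topologicalType) (h : Y -> W) (H : Y * R -> U),
    continuous h ->
    {within [set p : Y * R | I01 p.2], continuous H} ->
    (forall y, H (y, 0) = f (h y)) ->
    exists L : Y * R -> W,
      [/\ {within [set p : Y * R | I01 p.2], continuous L},
          (forall y, L (y, 0) = h y) &
          (forall p : Y * R, I01 p.2 -> f (L p) = H p)].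

Section Tensor.
Variables (W U : topologicalType) (f : W -> U) (I : Type).
Variables (dag : W) (U' : set U) (star' : U) (bp : I -> W) (gam : I -> R -> W).

Definition Wcomp (z : I) : set W := [set w | pconn (f @^-1` U') (bp z) w].

(* representatives (z, g, b) of elements of
   pi_1(W,dag) (x)_{pi_1(W'_z, bp z)} B(f|W'_z, bp z, star') *)
Definition tvalid (t : I * ((R -> W) * (R -> U))) :=
  path_in setT t.2.1 dag dag /\ path_in U' t.2.2 (f (bp t.1)) star'.

Definition conjW (z : I) (d : R -> W) : R -> W := pcat (pcat (gam z) d) (invpath (gam z)).

(* generating relations of the tensor product: change of representatives
   within homotopy classes, and (g k, c) = (g, k c) *)
Definition tensor_gen (t t' : I * ((R -> W) * (R -> U))) :=
  tvalid t /\ tvalid t' /\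
  ((t.1 = t'.1 /\ phtpy setT t.2.1 t'.2.1 /\ phtpy U' t.2.2 t'.2.2) \/
   exists (z : I) (g : R -> W) (b : R -> U) (d : R -> W),
     [/\ path_in (Wcomp z) d (bp z) (bp z),
         t = (z, (pcat g (conjW z d), b)) &
         t' = (z, (g, pcat (f \o d) b))]).

Definition tensor_eq := clos_refl_sym_trans _ tensor_gen.

End Tensor.

(* Main.v *)
Require Import Defs.
From HB Require Import structures.
From mathcomp Require Import all_boot all_order all_algebra.
From mathcomp Require Import all_classical all_reals topology normedtype.
From mathcomp Require Import Rstruct Rstruct_topology.
From mathcomp Require Import lra.
From Stdlib Require Import Rdefinitions Relations.
Import Order.TTheory GRing.Theory Num.Theory.
Import numFieldNormedType.Exports.
Local Open Scope classical_set_scope.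
Local Open Scope ring_scope.
Set Implicit Arguments.
Unset Strict Implicit.


Lemma cont_add (T : topologicalType) (f g : T -> R) :
  continuous f -> continuous g -> continuous (fun x => f x + g x).
Proof. move=> cf cg x; exact: (@continuousD _ R^o T f g x (cf x) (cg x)). Qed.
Lemma cont_mul (T : topologicalType) (f g : T -> R) :
  continuous f -> continuous g -> continuous (fun x => f x * g x).
Proof. move=> cf cg x; exact: (@continuousM R T f g x (cf x) (cg x)). Qed.
Lemma cont_opp (T : topologicalType) (f : T -> R) :
  continuous f -> continuous (fun x => - f x).
Proof. move=> cf x; exact: (@continuousN _ R^o T f x (cf x)). Qed.
Lemma cont_cst (T U : topologicalType) (c : U) : continuous (fun _ : T => c).
Proof. exact: cst_continuous. Qed.
Lemma cont_fst (T U : topologicalType) : continuous (fun u : T * U => u.1).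
Proof. move=> x; exact: cvg_fst. Qed.
Lemma cont_snd (T U : topologicalType) : continuous (fun u : T * U => u.2).
Proof. move=> x; exact: cvg_snd. Qed.
Lemma cont_pair (T U V : topologicalType) (f : T -> U) (g : T -> V) :
  continuous f -> continuous g -> continuous (fun x => (f x, g x)).
Proof. move=> cf cg x; apply: cvg_pair; [exact: cf|exact: cg]. Qed.
Lemma cont_id (T : topologicalType) : continuous (fun x : T => x).
Proof. move=> x; exact: cvg_id. Qed.

Lemma cw_comp (X Y Z : topologicalType) (A : set X) (B : set Y) (h : X -> Y) (g : Y -> Z) :
 {within A, continuous h} -> {within B, continuous g} -> (forall x, A x -> B (h x)) ->
 {within A, continuous (g \o h)}.
Proof.
move=> ch cg hAB; apply/continuousP => O oO.
have /open_subspaceP [V oV VB] := (continuousP _).1 cg O oO.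
have /open_subspaceP [V' oV' VA] := (continuousP _).1 ch V oV.
apply/open_subspaceP; exists V' => //; rewrite VA; apply/seteqP; split => x [Hx Ax]; split => //.
  have : (V `&` B) (h x) by split => //; exact: hAB.
  by rewrite VB => -[].
have : ((from_subspace B g) @^-1` O `&` B) (h x) by split => //; exact: hAB.
by rewrite -VB => -[].
Qed.

Lemma cw_ext (X Z : topologicalType) (A : set X) (f g : X -> Z) :
  (forall x, A x -> f x = g x) -> {within A, continuous f} -> {within A, continuous g}.
Proof. move=> e; apply: subspace_eq_continuous => x /set_mem Ax; exact: e. Qed.

Lemma cw_full (X Z : topologicalType) (A : set X) (f : X -> Z) :
  continuous f -> {within A, continuous f}.
Proof. exact: continuous_subspaceT. Qed.

Lemma cw_sub (X Z : topologicalType) (A B : set X) (f : X -> Z) :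
  A `<=` B -> {within B, continuous f} -> {within A, continuous f}.
Proof. exact: continuous_subspaceW. Qed.

Lemma cw_setT (X Z : topologicalType) (f : X -> Z) :
  {within setT, continuous f} -> continuous f.
Proof. by move=> h; apply/continuous_subspace_setT. Qed.

Lemma cw_add (T : topologicalType) (A : set T) (f g : T -> R) :
  {within A, continuous f} -> {within A, continuous g} ->
  {within A, continuous (fun x => f x + g x)}.
Proof. exact: (@cont_add (subspace A)). Qed.
Lemma cw_mul (T : topologicalType) (A : set T) (f g : T -> R) :
  {within A, continuous f} -> {within A, continuous g} ->
  {within A, continuous (fun x => f x * g x)}.
Proof. exact: (@cont_mul (subspace A)). Qed.
Lemma cw_opp (T : topologicalType) (A : set T) (f : T -> R) :
  {within A, continuous f} -> {within A, continuous (fun x => - f x)}.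
Proof. exact: (@cont_opp (subspace A)). Qed.
Lemma cw_pair (T U V : topologicalType) (A : set T) (f : T -> U) (g : T -> V) :
  {within A, continuous f} -> {within A, continuous g} ->
  {within A, continuous (fun x => (f x, g x))}.
Proof. exact: (@cont_pair (subspace A)). Qed.
Lemma cw_cst (T U : topologicalType) (A : set T) (c : U) :
  {within A, continuous (fun _ => c)}.
Proof. apply: cw_full; exact: cont_cst. Qed.
Lemma cw_id (T : topologicalType) (A : set T) : {within A, continuous (fun x => x)}.
Proof. apply: cw_full; exact: cont_id. Qed.
Lemma cw_fst (T U : topologicalType) (A : set (T * U)) : {within A, continuous (fun u => u.1)}.
Proof. apply: cw_full; exact: cont_fst. Qed.
Lemma cw_snd (T U : topologicalType) (A : set (T * U)) : {within A, continuous (fun u => u.2)}.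
Proof. apply: cw_full; exact: cont_snd. Qed.

Lemma cw_aff (T : topologicalType) (A : set T) (f : T -> R) (a b : R) :
  {within A, continuous f} -> {within A, continuous (fun x => a + b * f x)}.
Proof. move=> cf; apply: cw_add; first exact: cw_cst. apply: cw_mul => //; exact: cw_cst. Qed.

Lemma closed_seg (a b : R) : closed [set s : R | a <= s <= b].
Proof.
have -> : [set s : R | a <= s <= b] = [set s | a <= s] `&` [set s | s <= b].
  by apply/seteqP; split => s /=; [move/andP|move=> [-> ->]].
apply: closedI; [exact: closed_ge | exact: closed_le].
Qed.

Lemma closed_box (a b c d : R) :
  closed [set u : R * R | a <= u.1 <= b /\ c <= u.2 <= d].
Proof.
have -> : [set u : R * R | a <= u.1 <= b /\ c <= u.2 <= d] =
  ((fun u : R * R => u.1) @^-1` [set s | a <= s <= b]) `&`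
  ((fun u : R * R => u.2) @^-1` [set s | c <= s <= d]) by [].
apply: closedI.
  by move: (@cont_fst R R) => /continuous_closedP; apply; exact: closed_seg.
by move: (@cont_snd R R) => /continuous_closedP; apply; exact: closed_seg.
Qed.

Lemma I01_0 : I01 0. Proof. rewrite /I01 /=; lra. Qed.
Lemma I01_1 : I01 1. Proof. rewrite /I01 /=; lra. Qed.
Lemma I01E s : I01 s -> 0 <= s /\ s <= 1. Proof. by move/andP. Qed.
Lemma I01I s : 0 <= s -> s <= 1 -> I01 s. Proof. by move=> a b; apply/andP. Qed.
Lemma I01sqE u : I01sq u -> (0 <= u.1 /\ u.1 <= 1) /\ (0 <= u.2 /\ u.2 <= 1).
Proof. by move=> [/andP h /andP k]. Qed.
Lemma I01sqI u : 0 <= u.1 -> u.1 <= 1 -> 0 <= u.2 -> u.2 <= 1 -> I01sq u.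
Proof. by move=> a b c d; split; apply/andP. Qed.

Lemma leNE (x y : R) : (x <= y) = false -> y < x.
Proof. by move=> h; rewrite ltNge h. Qed.

Ltac I01_tac := repeat match goal with
  | H : I01 _ |- _ => move: (I01E H) => [? ?]; clear H
  | H : I01sq _ |- _ => move: (I01sqE H) => [[? ?] [? ?]]; clear H
  | H : (_ <= _) = false |- _ => move: (leNE H) => ?; clear H
  | H : is_true (_ <= _ <= _) |- _ => move: H => /andP [? ?]
  end.

Lemma cw_pcat_gen (X : topologicalType) (F : R -> X) :
  {within [set s : R | 0 <= s <= 1/2], continuous F} ->
  {within [set s : R | 1/2 <= s <= 1], continuous F} ->
  {within I01, continuous F}.
Proof.
move=> c1 c2.
have -> : I01 = [set s : R | 0 <= s <= 1/2] `|` [set s : R | 1/2 <= s <= 1].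
  apply/seteqP; split => s /=.
    rewrite /I01 /= => /andP [h0 h1]; case: (lerP s (1/2)) => h.
      by left; apply/andP.
    by right; apply/andP; split => //; apply: ltW.
  rewrite /I01 /= => -[] /andP [h0 h1]; apply/andP; split; lra.
apply: withinU_continuous => //; exact: closed_seg.
Qed.

Lemma cw_pcat (X : topologicalType) (p q : R -> X) :
  {within I01, continuous p} -> {within I01, continuous q} -> p 1 = q 0 ->
  {within I01, continuous (pcat p q)}.
Proof.
move=> cp cq e; apply: cw_pcat_gen.
  apply: (@cw_ext _ _ _ (p \o (fun s => 0 + 2 * s))).
    by move=> s /= /andP [h0 h1]; rewrite /pcat h1 add0r.
  apply: (@cw_comp _ _ _ _ I01) => //; first exact/cw_aff/cw_id.
  by move=> s /= /andP [h0 h1]; apply/andP; split; lra.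
apply: (@cw_ext _ _ _ (q \o (fun s => -1 + 2 * s))).
  move=> s /= /andP [h0 h1]; rewrite /pcat; case: ifP => h.
    have -> : s = 1/2 by apply/eqP; rewrite eq_le h h0.
    have -> : 2 * (1 / 2) = 1 :> R by lra.
    by rewrite e; congr q; lra.
  by congr q; lra.
apply: (@cw_comp _ _ _ _ I01) => //; first exact/cw_aff/cw_id.
by move=> s /= /andP [h0 h1]; apply/andP; split; lra.
Qed.

Lemma cw_sq_split1 (X : topologicalType) (F : R * R -> X) :
  {within [set u : R * R | 0 <= u.1 <= 1/2 /\ 0 <= u.2 <= 1], continuous F} ->
  {within [set u : R * R | 1/2 <= u.1 <= 1 /\ 0 <= u.2 <= 1], continuous F} ->
  {within I01sq, continuous F}.
Proof.
move=> c1 c2.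
have -> : I01sq = [set u : R * R | 0 <= u.1 <= 1/2 /\ 0 <= u.2 <= 1] `|`
                  [set u : R * R | 1/2 <= u.1 <= 1 /\ 0 <= u.2 <= 1].
  apply/seteqP; split => u /=.
    move=> [/andP [h0 h1] h2]; case: (lerP u.1 (1/2)) => h.
      by left; split => //; apply/andP.
    by right; split => //; apply/andP; split => //; apply: ltW.
  move=> [] [/andP [h0 h1] h2]; split => //; apply/andP; split; lra.
apply: withinU_continuous => //; exact: closed_box.
Qed.

Lemma cw_sq_split2 (X : topologicalType) (F : R * R -> X) :
  {within [set u : R * R | 0 <= u.1 <= 1 /\ 0 <= u.2 <= 1/2], continuous F} ->
  {within [set u : R * R | 0 <= u.1 <= 1 /\ 1/2 <= u.2 <= 1], continuous F} ->
  {within I01sq, continuous F}.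
Proof.
move=> c1 c2.
have -> : I01sq = [set u : R * R | 0 <= u.1 <= 1 /\ 0 <= u.2 <= 1/2] `|`
                  [set u : R * R | 0 <= u.1 <= 1 /\ 1/2 <= u.2 <= 1].
  apply/seteqP; split => u /=.
    move=> [h2 /andP [h0 h1]]; case: (lerP u.2 (1/2)) => h.
      by left; split => //; apply/andP.
    by right; split => //; apply/andP; split => //; apply: ltW.
  move=> [] [h2 /andP [h0 h1]]; split => //; apply/andP; split; lra.
apply: withinU_continuous => //; exact: closed_box.
Qed.

Lemma le0half : (0%R : R) <= 1/2.
Proof. have h : forall x : R, x = 0 -> x <= 1/2 by move=> x ->; lra. exact: h. Qed.
Lemma le1half : ((1%R : R) <= 1/2) = false.
Proof.
have h : forall x : R, x = 1 -> (x <= 1/2) = false.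
  by move=> x ->; apply/negbTE; rewrite -ltNge; lra.
exact: h.
Qed.
Lemma two1m1 : 2 * 1 - 1 = 1 :> R.
Proof. have h : forall x : R, x = 1 -> 2 * x - 1 = 1 by move=> x ->; lra. exact: h. Qed.
Lemma two_half : 2 * (1/2) = 1 :> R.
Proof. have h : forall x : R, x = 1 -> 2 * (x/2) = 1 by move=> x ->; lra. exact: h. Qed.
Lemma m1two_half : -1 + 2 * (1/2) = 0 :> R.
Proof. have h : forall x : R, x = 1 -> -1 + 2 * (x/2) = 0 by move=> x ->; lra. exact: h. Qed.
Lemma cw_subl (T : topologicalType) (A : set T) (f : T -> R) (a : R) :
  {within A, continuous f} -> {within A, continuous (fun x => a - f x)}.
Proof. move=> cf; apply: cw_add; first exact: cw_cst. exact: cw_opp. Qed.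

Section Paths.
Variable X : topologicalType.
Implicit Types (A B : set X) (p q r : R -> X) (a b c : X).

Lemma path_cst A a : A a -> path_in A (fun _ => a) a a.
Proof. by move=> Aa; split => //; exact: cw_cst. Qed.

Lemma path_pcat A p q a b c : path_in A p a b -> path_in A q b c ->
  path_in A (pcat p q) a c.
Proof.
move=> [cp Ap p0 p1] [cq Aq q0 q1]; split.
- by apply: cw_pcat => //; rewrite p1 q0.
- move=> s /I01E [h0 h1]; rewrite /pcat; case: lerP => h.
    by apply: Ap; apply: I01I; lra.
  by apply: Aq; apply: I01I; lra.
- rewrite /pcat; rewrite le0half. by rewrite mulr0.
- rewrite /pcat; rewrite le1half.
  by rewrite two1m1.
Qed.

Lemma path_inv A p a b : path_in A p a b -> path_in A (invpath p) b a.
Proof.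
move=> [cp Ap p0 p1]; split.
- apply: (@cw_ext _ _ _ (p \o (fun s : R => 1 + (-1) * s))).
    by move=> s _; rewrite /invpath /=; congr p; lra.
  apply: (@cw_comp _ _ _ _ I01 (fun s : R => 1 + (-1) * s)) => //.
    exact/cw_aff/cw_id.
  by move=> s /I01E [h0 h1]; apply: I01I; lra.
- by move=> s /I01E [h0 h1]; apply: Ap; apply: I01I; lra.
- by rewrite /invpath subr0.
- by rewrite /invpath subrr.
Qed.

Lemma path_sub A B p a b : A `<=` B -> path_in A p a b -> path_in B p a b.
Proof. by move=> AB [cp Ap p0 p1]; split => // s /Ap /AB. Qed.

Lemma path_ext A p q a b : path_in A p a b -> (forall s, I01 s -> p s = q s) ->
  path_in A q a b.
Proof.
move=> [cp Ap p0 p1] e; split.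
- exact: (cw_ext e).
- by move=> s hs; rewrite -e //; apply: Ap.
- by rewrite -e //; exact: I01_0.
- by rewrite -e //; exact: I01_1.
Qed.

Lemma path_sub_pconn A p a b s : path_in A p a b -> I01 s -> pconn A a (p s).
Proof.
move=> [cp Ap p0 p1] hs; exists (fun u => p (0 + s * u)); split.
- apply: (@cw_comp _ _ _ _ I01 (fun u => 0 + s * u) p) => //.
    exact/cw_aff/cw_id.
  by move=> u /I01E [h0 h1]; move/I01E: hs => [k0 k1]; apply: I01I; nra.
- by move=> u /I01E [h0 h1]; move/I01E: hs => [k0 k1]; apply: Ap; apply: I01I; nra.
- by rewrite mulr0 add0r.
- by rewrite mulr1 add0r.
Qed.

Lemma htpy_extl A p q r : phtpy A q r -> (forall s, I01 s -> p s = q s) -> phtpy A p r.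
Proof.
move=> [H [cH AH bH eH]] e; exists H; split => //.
- by move=> s hs; rewrite e //; exact: bH.
- by move=> t ht; rewrite !e; [exact: eH| exact: I01_1| exact: I01_0].
Qed.

Lemma htpy_extr A p q r : phtpy A p q -> (forall s, I01 s -> q s = r s) -> phtpy A p r.
Proof.
move=> [H [cH AH bH eH]] e; exists H; split => //.
by move=> s hs; rewrite -e //; exact: bH.
Qed.

Lemma htpy_refl A p a b : path_in A p a b -> phtpy A p p.
Proof.
move=> [cp Ap p0 p1]; exists (fun u => p u.1); split.
- apply: (@cw_comp _ _ _ _ I01 (fun u : R * R => u.1) p) => //; first exact: cw_fst.
  by move=> u [].
- by move=> s t hs ht; apply: Ap.
- by [].
- by [].
Qed.

Lemma htpy_ext A p q a b : path_in A p a b -> (forall s, I01 s -> p s = q s) -> phtpy A p q.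
Proof. move=> hp e; apply: htpy_extr e; exact: htpy_refl hp. Qed.

Lemma htpy_sym A p q : phtpy A p q -> phtpy A q p.
Proof.
move=> [H [cH AH bH eH]]; exists (fun u => H (u.1, 1 - u.2)); split.
- apply: (@cw_comp _ _ _ _ I01sq (fun u : R * R => (u.1, 1 - u.2)) H) => //.
    apply: cw_pair; first exact: cw_fst.
    by apply: cw_subl; exact: cw_snd.
  by move=> u /I01sqE [[? ?] [? ?]]; apply: I01sqI => /=; lra.
- by move=> s t hs ht /=; apply: AH => //; move/I01E: ht => [? ?]; apply: I01I; lra.
- move=> s hs; rewrite subr0 subrr; have [-> ->] := bH s hs; by [].
- move=> t ht; have h1t : I01 (1 - t) by move/I01E: ht => [? ?]; apply: I01I; lra.
  rewrite /=; have [-> ->] := eH _ h1t.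
  have [_ e0] := bH 0 I01_0; have [_ e1] := bH 1 I01_1; have [f0 f1] := eH 1 I01_1.
  by split; [rewrite -e0 f0 | rewrite -e1 f1].
Qed.

Lemma htpy_trans A p q r : phtpy A p q -> phtpy A q r -> phtpy A p r.
Proof.
move=> [H1 [cH1 AH1 bH1 eH1]] [H2 [cH2 AH2 bH2 eH2]].
exists (fun u => if u.2 <= 1/2 then H1 (u.1, 2 * u.2) else H2 (u.1, 2 * u.2 - 1)).
have q0 : q 0 = p 0 by have [_ <-] := bH1 0 I01_0; have [-> _] := eH1 1 I01_1.
have q1 : q 1 = p 1 by have [_ <-] := bH1 1 I01_1; have [_ ->] := eH1 1 I01_1.
split.
- apply: cw_sq_split2.
    apply: (@cw_ext _ _ _ (H1 \o (fun u : R * R => (u.1, 0 + 2 * u.2)))).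
      by move=> u /= [_ /andP [h0 h1]]; rewrite h1 add0r.
    apply: (@cw_comp _ _ _ _ I01sq) => //.
      by apply: cw_pair; [exact: cw_fst | apply: cw_aff; exact: cw_snd].
    by move=> u /= [/andP [? ?] /andP [? ?]]; apply: I01sqI => /=; lra.
  apply: (@cw_ext _ _ _ (H2 \o (fun u : R * R => (u.1, -1 + 2 * u.2)))).
    move=> u /= [hu /andP [h0 h1]]; case: lerP => h.
      have e : u.2 = 1/2 by apply/eqP; rewrite eq_le h h0.
      rewrite e m1two_half two_half.
      by have [_ ->] := bH1 _ hu; have [-> _] := bH2 _ hu.
    by congr H2; congr pair; lra.
  apply: (@cw_comp _ _ _ _ I01sq) => //.
    by apply: cw_pair; [exact: cw_fst | apply: cw_aff; exact: cw_snd].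
  by move=> u /= [/andP [? ?] /andP [? ?]]; apply: I01sqI => /=; lra.
- move=> s t hs /I01E [t0 t1] /=; case: lerP => h.
    by apply: AH1 => //; apply: I01I; lra.
  by apply: AH2 => //; apply: I01I; lra.
- move=> s hs /=; split.
    rewrite le0half.
    by rewrite mulr0; have [-> _] := bH1 s hs.
  rewrite le1half.
  rewrite two1m1.
  by have [_ ->] := bH2 s hs.
- move=> t /I01E [t0 t1] /=; case: lerP => h.
    by apply: eH1; apply: I01I; lra.
  rewrite -q0 -q1; apply: eH2; apply: I01I; lra.
Qed.

Lemma htpy_cat A p p' q q' : phtpy A p p' -> phtpy A q q' -> p 1 = q 0 ->
  phtpy A (pcat p q) (pcat p' q').
Proof.
move=> [H1 [cH1 AH1 bH1 eH1]] [H2 [cH2 AH2 bH2 eH2]] e.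
exists (fun u => if u.1 <= 1/2 then H1 (2 * u.1, u.2) else H2 (2 * u.1 - 1, u.2)).
split.
- apply: cw_sq_split1.
    apply: (@cw_ext _ _ _ (H1 \o (fun u : R * R => (0 + 2 * u.1, u.2)))).
      by move=> u /= [/andP [h0 h1] _]; rewrite h1 add0r.
    apply: (@cw_comp _ _ _ _ I01sq) => //.
      by apply: cw_pair; [apply: cw_aff; exact: cw_fst | exact: cw_snd].
    by move=> u /= [/andP [? ?] /andP [? ?]]; apply: I01sqI => /=; lra.
  apply: (@cw_ext _ _ _ (H2 \o (fun u : R * R => (-1 + 2 * u.1, u.2)))).
    move=> u /= [/andP [h0 h1] /andP [k0 k1]]; case: lerP => h.
      have e1 : u.1 = 1/2 by apply/eqP; rewrite eq_le h h0.
      rewrite e1 m1two_half two_half.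
      have hu : I01 u.2 by apply: I01I.
      by have [_ ->] := eH1 _ hu; have [-> _] := eH2 _ hu.
    by congr H2; congr pair; lra.
  apply: (@cw_comp _ _ _ _ I01sq) => //.
    by apply: cw_pair; [apply: cw_aff; exact: cw_fst | exact: cw_snd].
  by move=> u /= [/andP [? ?] /andP [? ?]]; apply: I01sqI => /=; lra.
- move=> s t /I01E [s0 s1] ht /=; case: lerP => h.
    by apply: AH1 => //; apply: I01I; lra.
  by apply: AH2 => //; apply: I01I; lra.
- move=> s /I01E [s0 s1] /=; rewrite /pcat; case: lerP => h.
    by apply: bH1; apply: I01I; lra.
  by apply: bH2; apply: I01I; lra.
- move=> t ht /=; rewrite /pcat; split.
    rewrite le0half.
    by rewrite mulr0; have [-> _] := eH1 t ht.
  rewrite le1half.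
  rewrite two1m1.
  by have [_ ->] := eH2 t ht.
Qed.

Lemma htpy_inv A p q : phtpy A p q -> phtpy A (invpath p) (invpath q).
Proof.
move=> [H [cH AH bH eH]]; exists (fun u => H (1 - u.1, u.2)); split.
- apply: (@cw_comp _ _ _ _ I01sq (fun u : R * R => (1 - u.1, u.2)) H) => //.
    apply: cw_pair; last exact: cw_snd.
    by apply: cw_subl; exact: cw_fst.
  by move=> u /I01sqE [[? ?] [? ?]]; apply: I01sqI => /=; lra.
- by move=> s t hs ht /=; apply: AH => //; move/I01E: hs => [? ?]; apply: I01I; lra.
- by move=> s hs /=; apply: bH; move/I01E: hs => [? ?]; apply: I01I; lra.
- by move=> t ht; rewrite /invpath subr0 subrr; have [-> ->] := eH t ht.
Qed.

Lemma htpy_sub A B p q : A `<=` B -> phtpy A p q -> phtpy B p q.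
Proof. by move=> AB [H [cH AH bH eH]]; exists H; split => // s t hs ht; apply/AB/AH. Qed.

End Paths.

Lemma path_fmap (X Y : topologicalType) (f : X -> Y) (A : set X) (B : set Y) p a b :
  continuous f -> (forall x, A x -> B (f x)) -> path_in A p a b ->
  path_in B (f \o p) (f a) (f b).
Proof.
move=> cf AB [cp Ap p0 p1]; split.
- apply: (@cw_comp _ _ _ _ setT) => //; first exact: cw_full.
- by move=> s hs; apply/AB/Ap.
- by rewrite /= p0.
- by rewrite /= p1.
Qed.

Lemma htpy_map (X Y : topologicalType) (f : X -> Y) (A : set X) (B : set Y) p q :
  continuous f -> (forall x, A x -> B (f x)) -> phtpy A p q -> phtpy B (f \o p) (f \o q).
Proof.
move=> cf AB [H [cH AH bH eH]]; exists (f \o H); split.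
- apply: (@cw_comp _ _ _ _ setT) => //; first exact: cw_full.
- by move=> s t hs ht; apply/AB/AH.
- by move=> s hs /=; have [-> ->] := bH s hs.
- by move=> t ht /=; have [-> ->] := eH t ht.
Qed.

Lemma comp_pcat (X Y : Type) (f : X -> Y) p q : f \o pcat p q = pcat (f \o p) (f \o q).
Proof. by apply/funext => s; rewrite /pcat /=; case: ifP. Qed.

Lemma cw_c1 (σ : R -> R * R) : {within I01, continuous σ} ->
  {within I01sq, continuous (fun u : R * R => (σ u.1).1)}.
Proof.
move=> cs.
have h1 : {within I01sq, continuous (σ \o (fun u : R * R => u.1))}.
  apply: (@cw_comp _ _ _ _ I01) => //; first exact: cw_fst.
  by move=> u [].
exact: (@cw_comp _ _ _ I01sq setT _ (fun v : R * R => v.1) h1 (@cw_fst _ _ _)).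
Qed.
Lemma cw_c2 (σ : R -> R * R) : {within I01, continuous σ} ->
  {within I01sq, continuous (fun u : R * R => (σ u.1).2)}.
Proof.
move=> cs.
have h1 : {within I01sq, continuous (σ \o (fun u : R * R => u.1))}.
  apply: (@cw_comp _ _ _ _ I01) => //; first exact: cw_fst.
  by move=> u [].
exact: (@cw_comp _ _ _ I01sq setT _ (fun v : R * R => v.2) h1 (@cw_snd _ _ _)).
Qed.

Lemma cvx01 (t a b : R) : 0 <= t <= 1 -> 0 <= a <= 1 -> 0 <= b <= 1 ->
  0 <= (1 - t) * a + t * b <= 1.
Proof. move=> /andP [? ?] /andP [? ?] /andP [? ?]; apply/andP; split; nra. Qed.

Section Square.
Variable X : topologicalType.

Lemma htpy_square (A : set X) (L : R * R -> X) (s1 s2 : R -> R * R) :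
  {within I01sq, continuous L} -> (forall u, I01sq u -> A (L u)) ->
  {within I01, continuous s1} -> {within I01, continuous s2} ->
  (forall s, I01 s -> I01sq (s1 s)) -> (forall s, I01 s -> I01sq (s2 s)) ->
  s1 0 = s2 0 -> s1 1 = s2 1 -> phtpy A (L \o s1) (L \o s2).
Proof.
move=> cL AL c1 c2 i1 i2 e0 e1.
pose mix := fun u : R * R =>
  ((1 - u.2) * (s1 u.1).1 + u.2 * (s2 u.1).1, (1 - u.2) * (s1 u.1).2 + u.2 * (s2 u.1).2).
have mixI : forall u, I01sq u -> I01sq (mix u).
  move=> [s t] [hs ht] /=; have [a1 a2] := i1 s hs; have [b1 b2] := i2 s hs.
  by split; apply: cvx01.
exists (L \o mix); split.
- apply: (@cw_comp _ _ _ _ I01sq) => //.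
  have hs1 : {within I01sq, continuous (fun u : R * R => 1 - u.2)}.
    by apply: cw_subl; exact: cw_snd.
  apply: cw_pair; apply: cw_add; apply: cw_mul;
    (exact: hs1 || exact: cw_snd || exact: cw_c1 || exact: cw_c2).
- by move=> s t hs ht; apply: AL; apply: mixI.
- move=> s hs; rewrite /mix /= subr0 subrr !mul1r !mul0r !addr0 !add0r.
  by rewrite -!surjective_pairing.
- move=> t ht; rewrite /mix /= -e0 -e1 -!mulrDl subrK !mul1r.
  by rewrite -!surjective_pairing.
Qed.

Lemma htpy_reparam (A : set X) p a b (f1 f2 : R -> R) c d :
  path_in A p a b -> path_in I01 f1 c d -> path_in I01 f2 c d ->
  phtpy A (p \o f1) (p \o f2).
Proof.
move=> [cp Ap p0 p1] [cf1 If1 f10 f11] [cf2 If2 f20 f21].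
have := @htpy_square A (fun u => p u.1) (fun s => (f1 s, 0)) (fun s => (f2 s, 0)).
apply.
- apply: (@cw_comp _ _ _ _ I01) => //; first exact: cw_fst. by move=> u [].
- by move=> u [hu _]; apply: Ap.
- by apply: cw_pair => //; exact: cw_cst.
- by apply: cw_pair => //; exact: cw_cst.
- by move=> s hs; split => /=; [apply: If1 | exact: I01_0].
- by move=> s hs; split => /=; [apply: If2 | exact: I01_0].
- by rewrite f10 f20.
- by rewrite f11 f21.
Qed.

End Square.

Lemma path_aff (a c : R) : I01 a -> I01 c ->
  path_in I01 (fun u => a + (c - a) * u) a c.
Proof.
move=> /I01E [a0 a1] /I01E [c0 c1]; split.
- exact/cw_aff/cw_id.
- by move=> u /I01E [u0 u1]; apply: I01I; nra.
- by rewrite mulr0 addr0.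
- by rewrite mulr1 addrC subrK.
Qed.

Lemma path_idR : path_in I01 (fun u : R => u) 0 1.
Proof.
split => //; first exact: cw_id.
Qed.

Lemma I01q : I01 (1/4). Proof. have h : forall x : R, x = 1 -> I01 (x/4) by move=> x ->; apply: I01I; lra. exact: h. Qed.
Lemma I01h : I01 (1/2). Proof. have h : forall x : R, x = 1 -> I01 (x/2) by move=> x ->; apply: I01I; lra. exact: h. Qed.


Ltac splitif1 := match goal with
  |- context [if (?x <= ?y) then _ else _] =>
     lazymatch x with context [if _ then _ else _] => fail | _ =>
     lazymatch y with context [if _ then _ else _] => fail | _ =>
     let h := fresh "h" in case: (lerP x y) => h /=; try (exfalso; lra) end end end.
Ltac ifcases := rewrite /pcat /invpath /=; repeat splitif1; try done.

Section Groupoid.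
Variable X : topologicalType.
Variable A : set X.
Implicit Types (p q r : R -> X) (a b c d : X).

Lemma hassoc p q r a b c d : path_in A p a b -> path_in A q b c -> path_in A r c d ->
  phtpy A (pcat (pcat p q) r) (pcat p (pcat q r)).
Proof.
move=> hp hq hr.
have hP := path_pcat (path_pcat hp hq) hr.
pose phi := pcat (fun u : R => 0 + (1/4 - 0) * u)
  (pcat (fun u : R => 1/4 + (1/2 - 1/4) * u) (fun u : R => 1/2 + (1 - 1/2) * u)).
have hphi : path_in I01 phi 0 1.
  apply: path_pcat; first exact: path_aff I01_0 I01q.
  by apply: path_pcat; [exact: path_aff I01q I01h | exact: path_aff I01h I01_1].
have h := htpy_reparam hP path_idR hphi.
have h2 : phtpy A (pcat (pcat p q) r \o (fun u => u)) (pcat p (pcat q r)).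
  apply: (htpy_extr h).
  move=> s /I01E [s0 s1]; rewrite /phi; ifcases; congr (_ _); lra.
exact: h2.
Qed.


Lemma path_cstR (x : R) : I01 x -> path_in I01 (fun _ : R => x) x x.
Proof. by move=> hx; apply: path_cst. Qed.

Lemma hlunit p a b : path_in A p a b -> phtpy A (pcat (fun _ => a) p) p.
Proof.
move=> hp; have hphi := path_pcat (path_cstR I01_0) path_idR.
have h := htpy_reparam hp hphi path_idR.
have h2 : phtpy A (pcat (fun _ => a) p) (p \o (fun u => u)).
  apply: (htpy_extl h); move=> s /I01E [s0 s1]; ifcases;
    try (congr (_ _); lra); by case: hp => _ _ -> _.
exact: h2.
Qed.

Lemma hrunit p a b : path_in A p a b -> phtpy A (pcat p (fun _ => b)) p.
Proof.
move=> hp; have hphi := path_pcat path_idR (path_cstR I01_1).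
have h := htpy_reparam hp hphi path_idR.
have h2 : phtpy A (pcat p (fun _ => b)) (p \o (fun u => u)).
  apply: (htpy_extl h); move=> s /I01E [s0 s1]; ifcases;
    try (congr (_ _); lra); by case: hp => _ _ _ ->.
exact: h2.
Qed.

Lemma hrinv p a b : path_in A p a b -> phtpy A (pcat p (invpath p)) (fun _ => a).
Proof.
move=> hp; have hphi := path_pcat path_idR (path_inv path_idR).
have h := htpy_reparam hp hphi (path_cstR I01_0).
apply: (htpy_extr (htpy_extl h _)); move=> s /I01E [s0 s1]; ifcases;
  try (congr (_ _); lra); by case: hp => _ _ -> _.
Qed.

Lemma hlinv p a b : path_in A p a b -> phtpy A (pcat (invpath p) p) (fun _ => b).
Proof.
move=> hp; have hphi := path_pcat (path_inv path_idR) path_idR.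
have h := htpy_reparam hp hphi (path_cstR I01_1).
apply: (htpy_extr (htpy_extl h _)); move=> s /I01E [s0 s1]; ifcases;
  try (congr (_ _); lra); by case: hp => _ _ _ ->.
Qed.

Lemma hcatl p q q' a b c : path_in A p a b -> path_in A q b c -> phtpy A q q' ->
  phtpy A (pcat p q) (pcat p q').
Proof.
move=> hp hq h; apply: (htpy_cat (htpy_refl hp) h).
by case: hp => _ _ _ ->; case: hq => _ _ -> _.
Qed.

Lemma hcatr p p' q a b c : path_in A p a b -> path_in A q b c -> phtpy A p p' ->
  phtpy A (pcat p q) (pcat p' q).
Proof.
move=> hp hq h; apply: (htpy_cat h (htpy_refl hq)).
by case: hp => _ _ _ ->; case: hq => _ _ -> _.
Qed.

End Groupoid.

Lemma path_restrict (X : topologicalType) (A B : set X) p a b :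
  path_in A p a b -> (forall s, I01 s -> B (p s)) -> path_in B p a b.
Proof. by move=> [cp _ p0 p1] hB; split. Qed.

Lemma path_mapw (X Y : topologicalType) (B : set X) (A : set Y) (L : X -> Y) s x y :
  path_in B s x y -> {within B, continuous L} -> (forall u, B u -> A (L u)) ->
  path_in A (L \o s) (L x) (L y).
Proof.
move=> [cs Bs s0 s1] cL BA; split.
- exact: (cw_comp cs cL Bs).
- by move=> t ht; apply/BA/Bs.
- by rewrite /= s0.
- by rewrite /= s1.
Qed.

Lemma seg_h0 : path_in I01sq (fun s : R => (s, 0)) (0, 0) (1, 0).
Proof.
split => //; first by apply: cw_pair; [exact: cw_id | exact: cw_cst].
by move=> s hs; split => //; exact: I01_0.
Qed.
Lemma seg_h1 : path_in I01sq (fun s : R => (s, 1)) (0, 1) (1, 1).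
Proof.
split => //; first by apply: cw_pair; [exact: cw_id | exact: cw_cst].
by move=> s hs; split => //; exact: I01_1.
Qed.
Lemma seg_v0 : path_in I01sq (fun s : R => (0, s)) (0, 0) (0, 1).
Proof.
split => //; first by apply: cw_pair; [exact: cw_cst | exact: cw_id].
by move=> s hs; split => //; exact: I01_0.
Qed.
Lemma seg_v1 : path_in I01sq (fun s : R => (1, s)) (1, 0) (1, 1).
Proof.
split => //; first by apply: cw_pair; [exact: cw_cst | exact: cw_id].
by move=> s hs; split => //; exact: I01_1.
Qed.

Lemma sq_boundary (X : topologicalType) (A : set X) (L : R * R -> X) :
  {within I01sq, continuous L} -> (forall u, I01sq u -> A (L u)) ->
  phtpy A (fun s => L (s, 0))
    (pcat (pcat (fun t => L (0, t)) (fun s => L (s, 1))) (invpath (fun t => L (1, t)))).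
Proof.
move=> cL AL.
have hd := path_mapw seg_h0 cL AL.
have ha := path_mapw seg_v0 cL AL.
have hb := path_mapw seg_h1 cL AL.
have hc := path_mapw seg_v1 cL AL.
have s1 := path_pcat seg_h0 seg_v1.
have s2 := path_pcat seg_v0 seg_h1.
have h : phtpy A (L \o pcat (fun s : R => (s, 0)) (fun s : R => (1, s)))
                 (L \o pcat (fun s : R => (0, s)) (fun s : R => (s, 1))).
  case: s1 => c1 i1 e10 e11; case: s2 => c2 i2 e20 e21.
  by apply: htpy_square => //; rewrite ?e10 ?e20 ?e11 ?e21.
rewrite !comp_pcat in h.
(* d ~ (d.c).c^-1 ~ (a.b).c^-1 *)
apply: htpy_trans (hcatr (path_pcat hd hc) (path_inv hc) h).
apply: htpy_sym.
apply: htpy_trans (hassoc hd hc (path_inv hc)) _.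
apply: htpy_trans (hcatl hd (path_pcat hc (path_inv hc)) (hrinv hc)) _.
exact: hrunit hd.
Qed.

Definition clamp (y : R) : R := Num.max 0 (Num.min 1 y).
Lemma clamp_cont : continuous clamp.
Proof.
move=> x. rewrite /clamp.
apply: (@continuous_max R R (fun _ => 0) (fun y => Num.min 1 y)); first exact: cst_continuous.
apply: (@continuous_min R R (fun _ => 1) (fun y => y)); first exact: cst_continuous.
exact: cvg_id.
Qed.
Lemma clampI y : I01 (clamp y).
Proof. rewrite /I01 /clamp /=; apply/andP; split; first by rewrite le_max lexx.
rewrite ge_max ler01 /= ge_min lexx //. Qed.
Lemma clampE y : I01 y -> clamp y = y.
Proof. move=> /andP[h0 h1]; rewrite /clamp. have -> : Num.min 1 y = y by apply/min_idPr. by apply/max_idPr. Qed.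

Section Fib.
Variables (W U : topologicalType) (f : W -> U).
Hypothesis f_fib : fibrant f.

Lemma lift_path c w0 y : path_in setT c (f w0) y ->
  exists lam w, path_in setT lam w0 w /\ (forall s, I01 s -> f (lam s) = c s).
Proof.
move=> [cc _ c0 c1].
have := @f_fib R (fun _ => w0) (fun p : R * R => c p.2) (@cont_cst R W w0).
case.
- apply: (@cw_comp _ _ _ _ I01) => //; first exact: cw_snd.
- by move=> y'; rewrite /= c0.
move=> L [cL L0 fL].
have hp : path_in setT (fun s => L (0, s)) w0 (L (0, 1)).
  split => //.
  - apply: (@cw_comp _ _ _ _ [set p : R * R | I01 p.2] (fun s : R => (0, s)) L) => //.
    by apply: cw_pair; [exact: cw_cst | exact: cw_id].
exists (fun s => L (0, s)), (L (0, 1)); split => // s hs; exact: fL.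
Qed.

Lemma lift_sq (G : R * R -> U) rho a b :
  {within I01sq, continuous G} -> path_in setT rho a b ->
  (forall s, I01 s -> f (rho s) = G (s, 0)) ->
  exists L : R * R -> W, [/\ {within I01sq, continuous L},
     (forall s, I01 s -> L (s, 0) = rho s) &
     (forall u, I01sq u -> f (L u) = G u)].
Proof.
move=> cG [cr _ r0 r1] fr.
have ch : continuous (rho \o clamp).
  apply: cw_setT; apply: (@cw_comp _ _ _ _ I01) => //.
    exact: cw_full clamp_cont.
  by move=> y _; exact: clampI.
have := @f_fib R (rho \o clamp) (fun p : R * R => G (clamp p.1, p.2)) ch.
case.
- apply: (@cw_comp _ _ _ _ I01sq (fun p : R * R => (clamp p.1, p.2)) G) => //.
    apply: cw_pair; last exact: cw_snd.
    apply: cw_full => x; apply: continuous_comp; [exact: cont_fst | exact: clamp_cont].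
  by move=> p hp; split => //; exact: clampI.
- by move=> y /=; rewrite fr //; exact: clampI.
move=> L [cL L0 fL]; exists L; split.
- by apply: (cw_sub _ cL) => u [].
- by move=> s hs; rewrite L0 /= clampE.
- by move=> [s t] [hs ht]; rewrite fL //= clampE.
Qed.

Lemma fiber_lemma rho a b (l : R -> U) y0 :
  path_in setT rho a b -> (forall s, I01 s -> f (rho s) = l s) ->
  phtpy setT l (fun _ => y0) -> l 0 = y0 -> l 1 = y0 ->
  exists m, path_in [set w | f w = y0] m a b /\ phtpy setT rho m.
Proof.
move=> hr fr [G [cG _ bG eG]] l0 l1.
have [L [cL L0 fL]] : exists L : R * R -> W, [/\ {within I01sq, continuous L},
     (forall s, I01 s -> L (s, 0) = rho s) &
     (forall u, I01sq u -> f (L u) = G u)].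
  apply: (lift_sq cG hr) => s hs; rewrite fr //; by have [-> _] := bG s hs.
have AL : forall u, I01sq u -> setT (L u) by [].
have hsq := sq_boundary cL AL.
have he1 := path_mapw seg_v0 cL AL.
have he2 := path_mapw seg_h1 cL AL.
have he3 := path_mapw seg_v1 cL AL.
have F1 : path_in [set w | f w = y0] (fun t => L (0, t)) (L (0, 0)) (L (0, 1)).
  apply: (path_restrict he1) => t ht /=; rewrite fL; last by split => //; exact: I01_0.
  by have [-> _] := eG t ht.
have F2 : path_in [set w | f w = y0] (fun t => L (t, 1)) (L (0, 1)) (L (1, 1)).
  apply: (path_restrict he2) => t ht /=; rewrite fL; last by split => //; exact: I01_1.
  by have [_ ->] := bG t ht.
have F3 : path_in [set w | f w = y0] (fun t => L (1, t)) (L (1, 0)) (L (1, 1)).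
  apply: (path_restrict he3) => t ht /=; rewrite fL; last by split => //; exact: I01_1.
  by have [_ ->] := eG t ht.
have hm := path_pcat (path_pcat F1 F2) (path_inv F3).
rewrite L0 in hm; last exact: I01_0.
rewrite L0 in hm; last exact: I01_1.
case: hr => cr Ar r0 r1; rewrite r0 r1 in hm.
exists (pcat (pcat (fun t => L (0, t)) (fun t => L (t, 1))) (invpath (fun t => L (1, t)))).
split => //.
apply: htpy_extl hsq _ => s hs; rewrite L0 //.
Qed.

End Fib.

Section Ident.
Variable X : topologicalType.
Variable A : set X.
Implicit Types (p q r : R -> X) (a b c d e : X).
Local Notation "p ~ q" := (phtpy A p q) (at level 70).
Local Notation "p @@ q" := (pcat p q) (at level 40, left associativity).
Local Notation iv := invpath.

Lemma ht p q r : p ~ q -> q ~ r -> p ~ r. Proof. exact: htpy_trans. Qed.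
Lemma hs p q : p ~ q -> q ~ p. Proof. exact: htpy_sym. Qed.

Lemma hassocV p q r a b c d : path_in A p a b -> path_in A q b c -> path_in A r c d ->
  p @@ (q @@ r) ~ (p @@ q) @@ r.
Proof. by move=> *; apply: hs; apply: hassoc; eauto. Qed.

Lemma hcancel p q r a b e d : path_in A p a e -> path_in A q b e -> path_in A r e d ->
  (p @@ (iv q)) @@ (q @@ r) ~ p @@ r.
Proof.
move=> hp hq hr.
have hq' := path_inv hq.
apply: ht (hassoc hp hq' (path_pcat hq hr)) _.
apply: hcatl hp (path_pcat hq' (path_pcat hq hr)) _.
apply: ht (hassocV hq' hq hr) _.
apply: ht (hcatr (path_pcat hq' hq) hr (hlinv hq)) _.
exact: hlunit hr.
Qed.

Lemma hcancel2 p q a b c : path_in A p a b -> path_in A q b c -> (p @@ q) @@ (iv q) ~ p.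
Proof.
move=> hp hq; have hq' := path_inv hq.
apply: ht (hassoc hp hq hq') _.
apply: ht (hcatl hp (path_pcat hq hq') (hrinv hq)) _.
exact: hrunit hp.
Qed.

Lemma hcancel3 p q a b c : path_in A p a c -> path_in A q b c -> (p @@ (iv q)) @@ q ~ p.
Proof.
move=> hp hq; have hq' := path_inv hq.
apply: ht (hassoc hp hq' hq) _.
apply: ht (hcatl hp (path_pcat hq' hq) (hlinv hq)) _.
exact: hrunit hp.
Qed.

(* well-definedness, case 2 *)
Lemma id_wd2 g cc dd bb ss x0 x1 x2 x3 x4 :
  path_in A g x0 x1 -> path_in A cc x1 x2 -> path_in A dd x2 x2 ->
  path_in A bb x2 x3 -> path_in A ss x3 x4 ->
  (g @@ ((cc @@ dd) @@ (iv cc))) @@ ((cc @@ bb) @@ ss) ~ g @@ ((cc @@ (dd @@ bb)) @@ ss).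
Proof.
move=> hg hc hd hb hs'.
have hcd := path_pcat hc hd.
have hc' := path_inv hc.
have hcdc := path_pcat hcd hc'.
have hcbs := path_pcat (path_pcat hc hb) hs'.
apply: ht (hassoc hg hcdc hcbs) _.
apply: hcatl hg (path_pcat hcdc hcbs) _.
apply: ht (hcatl hcdc hcbs (hassoc hc hb hs')) _.
apply: ht (hcancel hcd hc (path_pcat hb hs')) _.
apply: ht (hassoc hc hd (path_pcat hb hs')) _.
apply: ht (hcatl hc (path_pcat hd (path_pcat hb hs')) (hassocV hd hb hs')) _.
exact: hassocV hc (path_pcat hd hb) hs'.
Qed.

(* surjectivity *)
Lemma id_surj lam ee gg ss pp a w v g0 s0 :
  path_in A pp a s0 -> path_in A ss s0 w -> path_in A lam a w ->
  path_in A ee v w -> path_in A gg g0 v ->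
  lam ~ pp @@ ss ->
  ((lam @@ (iv ee)) @@ (iv gg)) @@ ((gg @@ ee) @@ (iv ss)) ~ pp.
Proof.
move=> hp hs' hl he hg hlam.
have hs'' := path_inv hs'.
have hle := path_pcat hl (path_inv he).
apply: ht (hcatl (path_pcat hle (path_inv hg)) (path_pcat (path_pcat hg he) hs'')
          (hassoc hg he hs'')) _.
apply: ht (hcancel hle hg (path_pcat he hs'')) _.
apply: ht (hcancel hl he hs'') _.
apply: ht (hcatr hl hs'' hlam) _.
exact: hcancel2 hp hs'.
Qed.

(* right equivariance *)
Lemma id_req g cc bb ee ss a b c w s0 :
  path_in A g a b -> path_in A cc b c -> path_in A bb c w ->
  path_in A ee w w -> path_in A ss s0 w ->
  g @@ ((cc @@ (bb @@ ee)) @@ (iv ss)) ~ (g @@ ((cc @@ bb) @@ (iv ss))) @@ ((ss @@ ee) @@ (iv ss)).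
Proof.
move=> hg hc hb he hs'.
have hs'' := path_inv hs'.
have hcb := path_pcat hc hb.
have hcbs := path_pcat hcb hs''.
apply: hs.
apply: ht (hassoc hg hcbs (path_pcat (path_pcat hs' he) hs'')) _.
apply: hcatl hg (path_pcat hcbs (path_pcat (path_pcat hs' he) hs'')) _.
apply: ht (hcatl hcbs (path_pcat (path_pcat hs' he) hs'') (hassoc hs' he hs'')) _.
apply: ht (hcancel hcb hs' (path_pcat he hs'')) _.
apply: ht (hassocV hcb he hs'') _.
apply: hcatr (path_pcat hcb he) hs'' _.
exact: hassoc hc hb he.
Qed.

Lemma id_phi g cc bb ss a b c w s0 :
  path_in A g a b -> path_in A cc b c -> path_in A bb c w -> path_in A ss s0 w ->
  g @@ ((cc @@ bb) @@ (iv ss)) ~ ((g @@ cc) @@ bb) @@ (iv ss).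
Proof.
move=> hg hc hb hs'.
have hs'' := path_inv hs'.
apply: ht (hassocV hg (path_pcat hc hb) hs'') _.
apply: hcatr (path_pcat hg (path_pcat hc hb)) hs'' _.
exact: hassocV hg hc hb.
Qed.

Lemma id_rcancel p q ss a w s0 :
  path_in A p a w -> path_in A q a w -> path_in A ss s0 w ->
  p @@ (iv ss) ~ q @@ (iv ss) -> p ~ q.
Proof.
move=> hp hq hs' h.
apply: ht (hs (hcancel3 hp hs')) _.
apply: ht (hcatr (path_pcat hp (path_inv hs')) hs' h) _.
exact: hcancel3 hq hs'.
Qed.

Lemma id_loop p q a b : path_in A p a b -> path_in A q a b -> p ~ q ->
  (iv q) @@ p ~ (fun _ => b).
Proof.
move=> hp hq h.
apply: ht (hcatl (path_inv hq) hp h) _.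
exact: hlinv hq.
Qed.

Lemma id_lmove pp pp' m d w w' :
  path_in A pp d w -> path_in A pp' d w' -> path_in A m w' w ->
  (iv pp') @@ pp ~ m -> pp ~ pp' @@ m.
Proof.
move=> hp hp' hm h.
have hp'' := path_inv hp'.
have Ad : A d by case: hp => _ Ap <- _; apply: Ap; exact: I01_0.
apply: ht (hs (hlunit hp)) _.
apply: ht (hcatr (path_cst Ad) hp (hs (hrinv hp'))) _.
apply: ht (hassoc hp' hp'' hp) _.
exact: hcatl hp' (path_pcat hp'' hp) h.
Qed.

Lemma id_grel g gm bt g' bt' m d z w w' :
  path_in A g d d -> path_in A gm d z -> path_in A bt z w ->
  path_in A g' d d -> path_in A bt' z w' -> path_in A m w' w ->
  (g @@ gm) @@ bt ~ ((g' @@ gm) @@ bt') @@ m ->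
  g ~ g' @@ ((gm @@ ((bt' @@ m) @@ (iv bt))) @@ (iv gm)).
Proof.
move=> hg hgm hb hg' hb' hm h.
have hgg := path_pcat hg hgm.
have hbi := path_inv hb.
have hgmi := path_inv hgm.
have hbm := path_pcat hb' hm.
have hdl := path_pcat hbm hbi.
apply: ht (hs (hcancel2 hg hgm)) _.
apply: ht (hcatr hgg hgmi (hs (hcancel2 hgg hb))) _.
have hQ : ((((g' @@ gm) @@ bt') @@ m) @@ (iv bt)) ~ g' @@ (gm @@ ((bt' @@ m) @@ (iv bt))).
  have hg'g := path_pcat hg' hgm.
  have e1 : ((g' @@ gm) @@ bt') @@ m ~ g' @@ (gm @@ (bt' @@ m)).
    apply: ht (hassoc hg'g hb' hm) _.
    exact: hassoc hg' hgm hbm.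
  apply: ht (hcatr (path_pcat (path_pcat hg'g hb') hm) hbi e1) _.
  apply: ht (hassoc hg' (path_pcat hgm hbm) hbi) _.
  apply: hcatl hg' (path_pcat (path_pcat hgm hbm) hbi) _.
  exact: hassoc hgm hbm hbi.
have h2 : (((g @@ gm) @@ bt) @@ (iv bt)) ~ ((((g' @@ gm) @@ bt') @@ m) @@ (iv bt)).
  exact: hcatr (path_pcat hgg hb) hbi h.
apply: ht (hcatr (path_pcat (path_pcat hgg hb) hbi) hgmi (ht h2 hQ)) _.
exact: hassoc hg' (path_pcat hgm hdl) hgmi.
Qed.

Lemma id_bfix p1 p2 p3 q r x y :
  path_in A p1 x y -> path_in A p2 y y -> path_in A p3 x y ->
  path_in A q x y -> path_in A r x y ->
  p1 ~ q -> p2 ~ (fun _ => y) -> p3 ~ r ->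
  ((p1 @@ p2) @@ (iv p3)) @@ r ~ q.
Proof.
move=> h1 h2 h3 hq hr e1 e2 e3.
have Ay : A y by case: hq => _ Ap _ <-; apply: Ap; exact: I01_1.
have hc := path_cst Ay.
have hqc := path_pcat hq hc.
have h12 := path_pcat h1 h2.
have h3i := path_inv h3.
have s1 : (p1 @@ p2) ~ (q @@ (fun _ => y)).
  exact: ht (hcatr h1 h2 e1) (hcatl hq h2 e2).
have s2 : (p1 @@ p2) @@ (iv p3) ~ (q @@ (fun _ => y)) @@ (iv r).
  exact: ht (hcatr h12 h3i s1) (hcatl hqc h3i (htpy_inv e3)).
apply: ht (hcatr (path_pcat h12 h3i) hr s2) _.
apply: ht (hcancel3 hqc hr) _.
exact: hrunit hq.
Qed.

End Ident.

Lemma pcat_ext (X : Type) (p p' q q' : R -> X) :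
  (forall s, I01 s -> p s = p' s) -> (forall s, I01 s -> q s = q' s) ->
  forall s, I01 s -> pcat p q s = pcat p' q' s.
Proof.
move=> ep eq s /I01E [s0 s1]; rewrite /pcat; case: lerP => h.
  by apply: ep; apply: I01I; lra.
by apply: eq; apply: I01I; lra.
Qed.

Lemma inv_ext (X : Type) (p p' : R -> X) :
  (forall s, I01 s -> p s = p' s) -> forall s, I01 s -> invpath p s = invpath p' s.
Proof. by move=> ep s /I01E [s0 s1]; rewrite /invpath; apply: ep; apply: I01I; lra. Qed.

Lemma comp_inv (X Y : Type) (f : X -> Y) (p : R -> X) : f \o invpath p = invpath (f \o p).
Proof. by []. Qed.

Lemma path_ends (X : topologicalType) (A : set X) p a b : path_in A p a b -> p 0 = a /\ p 1 = b.
Proof. by case. Qed.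

Lemma path_mem (X : topologicalType) (A : set X) p a b s : path_in A p a b -> I01 s -> A (p s).
Proof. by case=> _ h _ _; apply: h. Qed.

Unset Implicit Arguments.
Theorem mainTheorem16
  (W U : topologicalType) (f : W -> U)
  (f_cont : continuous f) (f_fib : fibrant f)
  (W_pc : path_connected [set: W]) (U_pc : path_connected [set: U])
  (dag : W) (star : U)
  (U' : set U) (star' : U) (star'_in : U' star') (U'_pc : path_connected U')
  (I : Type) (bp : I -> W)
  (bp_in : forall z, (f @^-1` U') (bp z))
  (bp_comp : forall w, (f @^-1` U') w ->
      exists! z, pconn (f @^-1` U') (bp z) w)
  (gam : I -> R -> W) (gam_path : forall z, path_in setT (gam z) dag (bp z))
  (gstar : R -> U) (gstar_path : path_in setT gstar star star') :
  let Phi := fun t : I * ((R -> W) * (R -> U)) =>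
    pcat (f \o t.2.1) (pcat (pcat (f \o gam t.1) t.2.2) (invpath gstar)) in
  let valid := tvalid f dag U' star' bp in
  let teq := tensor_eq f dag U' star' bp gam in
  (* well defined *)
  (forall t t', valid t -> valid t' -> teq t t' -> phtpy setT (Phi t) (Phi t')) /\
  (* injective *)
  (forall t t', valid t -> valid t' -> phtpy setT (Phi t) (Phi t') -> teq t t') /\
  (* surjective *)
  (forall p, path_in setT p (f dag) star -> exists t, valid t /\ phtpy setT (Phi t) p) /\
  (* left pi_1(W,dag)-equivariance *)
  (forall h t, path_in setT h dag dag -> valid t ->
     phtpy setT (Phi (t.1, (pcat h t.2.1, t.2.2))) (pcat (f \o h) (Phi t))) /\
  (* right pi_1(U',star')-equivariance, acting on B(f,dag,star) via ()^- *)
  (forall e t, path_in U' e star' star' -> valid t ->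
     phtpy setT (Phi (t.1, (t.2.1, pcat t.2.2 e))) (pcat (Phi t) (pcat (pcat gstar e) (invpath gstar)))).
Proof.
move=> Phi valid teq.
have fP : forall p a b, path_in setT p a b -> path_in setT (f \o p) (f a) (f b).
  move=> p a b hp; apply: (path_fmap f_cont _ hp) => //.
have fPU : forall p a b, path_in (f @^-1` U') p a b -> path_in U' (f \o p) (f a) (f b).
  move=> p a b hp; apply: (path_fmap f_cont _ hp) => //.
have UT : forall p a b, path_in U' p a b -> path_in setT p a b.
  by move=> p a b hp; apply: (path_sub _ hp) => x _.
have WT : forall (B : set W) p a b, path_in B p a b -> path_in setT p a b.
  by move=> B p a b hp; apply: (path_sub _ hp) => x _.
have hgs' := path_inv gstar_path.
have PhiP : forall t, valid t -> path_in setT (Phi t) (f dag) star.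
  move=> [z [g b]] [/= hg hb]; rewrite /Phi /=.
  apply: path_pcat (fP _ _ _ hg) _.
  exact: path_pcat (path_pcat (fP _ _ _ (gam_path z)) (UT _ _ _ hb)) hgs'.
split; last split; last split; last split.
- have key : forall t t', teq t t' -> t = t' \/ (valid t /\ valid t' /\ phtpy setT (Phi t) (Phi t')).
    move=> t t'; elim => {t t'}.
    + move=> x y [vx [vy gen]]; right; split => //; split => //.
      case: gen.
        move: x y vx vy => [z [g b]] [z' [g' b']] [/= hg hb] [/= hg' hb'].
        move=> [/= ez [eg eb]]; subst z'.
        rewrite /Phi /=.
        have hr := path_pcat (path_pcat (fP _ _ _ (gam_path z)) (UT _ _ _ hb)) hgs'.
        apply: htpy_trans (hcatr (fP _ _ _ hg) hr (htpy_map f_cont (fun x _ => Logic.I) eg)) _.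
        apply: hcatl (fP _ _ _ hg') hr _.
        apply: hcatr (path_pcat (fP _ _ _ (gam_path z)) (UT _ _ _ hb)) hgs' _.
        apply: hcatl (fP _ _ _ (gam_path z)) (UT _ _ _ hb) _.
        by apply: (htpy_sub _ eb).
      move=> [z [g [b [d [hd ex ey]]]]]; subst x y.
      move: vx vy => [/= hg1 hb] [/= hg _].
      rewrite /Phi /= !comp_pcat.
      have hd' := fP _ _ _ (WT _ _ _ _ hd).
      exact: (id_wd2 (fP _ _ _ hg) (fP _ _ _ (gam_path z)) hd' (UT _ _ _ hb) hgs').
    + by move=> x; left.
    + move=> x y _ [-> | [vx [vy h]]]; [by left | right].
      by split => //; split => //; apply: htpy_sym.
    + move=> x y z _ [-> | [vx [vy h1]]] _ [<- | [vy' [vz h2]]].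
      * by left.
      * by right.
      * by right.
      * by right; split => //; split => //; apply: htpy_trans h1 h2.
  move=> t t' vt vt' /key [-> | [_ [_ h]]] //.
  exact: htpy_refl (PhiP _ vt').
- move=> [z [g b]] [z' [g' b']] vt vt' hPhi.
  case: (vt) => /= hg hb; case: (vt') => /= hg' hb'.
  rewrite /Phi /= in hPhi.
  have hA := path_pcat (path_pcat (fP _ _ _ hg) (fP _ _ _ (gam_path z))) (UT _ _ _ hb).
  have hA' := path_pcat (path_pcat (fP _ _ _ hg') (fP _ _ _ (gam_path z'))) (UT _ _ _ hb').
  have eA : phtpy setT (pcat (pcat (f \o g) (f \o gam z)) b)
                       (pcat (pcat (f \o g') (f \o gam z')) b').
    apply: (id_rcancel hA hA' gstar_path).
    apply: htpy_trans (htpy_sym (id_phi (fP _ _ _ hg) (fP _ _ _ (gam_path z)) (UT _ _ _ hb) gstar_path)) _.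
    apply: htpy_trans hPhi _.
    exact: id_phi (fP _ _ _ hg') (fP _ _ _ (gam_path z')) (UT _ _ _ hb') gstar_path.
  have [bt [w [hbt fbt]]] := lift_path f_fib (UT _ _ _ hb).
  have [bt' [w' [hbt' fbt']]] := lift_path f_fib (UT _ _ _ hb').
  have fw : f w = star'.
    have [_ e1] := path_ends hbt; rewrite -e1 fbt; last exact: I01_1.
    by have [_ ->] := path_ends hb.
  have fw' : f w' = star'.
    have [_ e1] := path_ends hbt'; rewrite -e1 fbt'; last exact: I01_1.
    by have [_ ->] := path_ends hb'.
  have hbtU : path_in (f @^-1` U') bt (bp z) w.
    apply: (path_restrict hbt) => s hs /=; rewrite fbt //; exact: path_mem hb hs.
  have hbtU' : path_in (f @^-1` U') bt' (bp z') w'.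
    apply: (path_restrict hbt') => s hs /=; rewrite fbt' //; exact: path_mem hb' hs.
  have hP := path_pcat (path_pcat hg (gam_path z)) hbt.
  have hP' := path_pcat (path_pcat hg' (gam_path z')) hbt'.
  have hrho := path_pcat (path_inv hP') hP.
  have hl := path_pcat (path_inv hA') hA.
  have frho : forall s, I01 s ->
      f (pcat (invpath (pcat (pcat g' (gam z')) bt')) (pcat (pcat g (gam z)) bt) s) =
      pcat (invpath (pcat (pcat (f \o g') (f \o gam z')) b')) (pcat (pcat (f \o g) (f \o gam z)) b) s.
    move=> s hs; rewrite -[f _]/((f \o _) s) !(comp_pcat, comp_inv).
    move: s hs; apply: pcat_ext; first apply: inv_ext.
      by apply: pcat_ext => // s hs; exact: fbt'.
    by apply: pcat_ext => // s hs; exact: fbt.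
  have lcst := id_loop hA hA' eA.
  have [l0 l1] := path_ends hl.
  have [m [hm hrm]] := fiber_lemma f_fib hrho frho lcst l0 l1.
  have wU' : (f @^-1` U') w' by rewrite /= fw'.
  have hmU : path_in (f @^-1` U') m w' w.
    by apply: (path_sub _ hm) => x /= ->.
  have pc1 : pconn (f @^-1` U') (bp z') w' by exists bt'.
  have pc2 : pconn (f @^-1` U') (bp z) w'.
    by exists (pcat bt (invpath m)); exact: path_pcat hbtU (path_inv hmU).
  have [z0 [_ uq]] := bp_comp w' wU'.
  have ez : z = z' by rewrite -(uq z pc2) (uq z' pc1).
  subst z'.
  have hPP' := id_lmove hP hP' (WT _ _ _ _ hm) hrm.
  have hgrel := id_grel hg (gam_path z) hbt hg' hbt' (WT _ _ _ _ hm) hPP'.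
  have hdU := path_pcat (path_pcat hbtU' hmU) (path_inv hbtU).
  have hdW := path_restrict hdU (fun s hs => path_sub_pconn hdU hs).
  have hfd := fPU _ _ _ hdU.
  have hg2 := path_pcat hg' (path_pcat (path_pcat (gam_path z) (WT _ _ _ _ hdU)) (path_inv (gam_path z))).
  rewrite /teq /tensor_eq.
  apply: (rst_trans _ _ _ (z, (pcat g' (pcat (pcat (gam z) (pcat (pcat bt' m) (invpath bt))) (invpath (gam z))), b))).
    apply: rst_step; split => //; split; first by split.
    left; split => //; split => //=; exact: htpy_refl hb.
  apply: (rst_trans _ _ _ (z, (g', pcat (f \o (pcat (pcat bt' m) (invpath bt))) b))).
    apply: rst_step; split; first by split.
    split; first by split => //=; exact: path_pcat hfd hb.
    by right; exists z, g', b, (pcat (pcat bt' m) (invpath bt)); split.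
  apply: rst_step; split.
    by split => //=; exact: path_pcat hfd hb.
  split; first by [].
  left; split => //; split => /=; first exact: htpy_refl hg'.
  have h1 := fPU _ _ _ hbtU'; rewrite fw' in h1.
  have h2 := fPU _ _ _ hmU; rewrite fw fw' in h2.
  have h3 := fPU _ _ _ hbtU; rewrite fw in h3.
  rewrite !(comp_pcat, comp_inv).
  apply: (id_bfix h1 h2 h3 hb' hb).
  - by apply: (htpy_ext h1) => s hs; exact: fbt'.
  - by apply: (htpy_ext h2) => s hs /=; exact: (path_mem hm hs).
  - by apply: (htpy_ext h3) => s hs; exact: fbt.
- move=> p hp.
  have hc := path_pcat hp gstar_path.
  have [lam [w [hlam flam]]] := lift_path f_fib hc.
  have [l0 l1] := path_ends hlam.
  have fw : f w = star'.
    rewrite -l1 flam; last exact: I01_1.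
    by have [_ ->] := path_ends hc.
  have wU : (f @^-1` U') w by rewrite /= fw.
  have [z [[e he] _]] := bp_comp w wU.
  have hg := path_pcat (path_pcat hlam (path_inv (WT _ _ _ _ he))) (path_inv (gam_path z)).
  have hb := fPU _ _ _ he; rewrite fw in hb.
  exists (z, (pcat (pcat lam (invpath e)) (invpath (gam z)), f \o e)); split.
    by split.
  rewrite /Phi /= !comp_pcat.
  have hfl := fP _ _ _ hlam; rewrite fw in hfl.
  have hfe := fP _ _ _ (WT _ _ _ _ he); rewrite fw in hfe.
  apply: (id_surj hp gstar_path hfl hfe (fP _ _ _ (gam_path z))).
  apply: (htpy_ext hfl) => s hs /=; exact: flam.
- move=> h [z [g b]] hh [/= hg hb]; rewrite /Phi /= comp_pcat.
  apply: hassoc (fP _ _ _ hh) (fP _ _ _ hg) _.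
  exact: path_pcat (path_pcat (fP _ _ _ (gam_path z)) (UT _ _ _ hb)) hgs'.
- move=> e [z [g b]] he [/= hg hb]; rewrite /Phi /=.
  exact: id_req (fP _ _ _ hg) (fP _ _ _ (gam_path z)) (UT _ _ _ hb) (UT _ _ _ he) gstar_path.
Qed.
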